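(* For each $k$ (indices mod $8g-4$), the arc length of $T_k([P_{k+2},Q_{k+2}])$ is less than half the arc length of $[P_{\sigma(k)},Q_{\sigma(k)}]$, and the arc length of $T_k([P_{k-1},Q_{k-1}])$ is less than half the arc length of $[P_{\sigma(k)+1},Q_{\sigma(k)+1}]$.
   Context: Setting. Fix $g\ge 2$; indices are mod $8g-4$. Let $\mathcal F$ be the regular hyperbolic $(8g-4)$-gon in the unit disk centered at $0$ with all interior angles $\pi/2$, sides labeled $1,\dots,8g-4$ counterclockwise, side $i$ joining vertices $V_i$ and $V_{i+1}$. The complete geodesic extending side $i$ goes from $P_i$ (beyond $V_i$) to $Q_{i+1}$ (beyond $V_{i+1}$) on the unit circle; counterclockwise order $P_1,Q_1,P_2,Q_2,\dots,P_{8g-4},Q_{8g-4}$. $\sigma(i)=4g-i$ ($i$ odd), $\sigma(i)=2-i$ ($i$ even). $T_i$ is the Möbius transformation mapping side $i$ onto side $\sigma(i)$, with isometric circle the geodesic $P_iQ_{i+1}$, mapped onto the geodesic $Q_{\sigma(i)+1}P_{\sigma(i)}$, inside to outside. Arcs $[A,B]$ are counterclockwise from $A$ to $B$. *)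

(* Defs.v *)
From Stdlib Require Import Reals ZArith.
From Coquelicot Require Import Coquelicot.
Open Scope R_scope.

Definition Nsides (g : nat) : R := 8 * INR g - 4.

Definition cis (t : R) : C := (cos t, sin t).

(* the side pairing index map sigma (on all integers; it is compatible
   with reduction mod 8g-4 since 8g-4 is even) *)
Definition sig_idx (g : nat) (i : Z) : Z :=
  if Z.odd i then (4 * Z.of_nat g - i)%Z else (2 - i)%Z.

Definition dot (u v : C) : R := Re (Cmult u (Cconj v)).

(* counterclockwise arc length from A to B (A, B on the unit circle):
   the unique t in [0, 2 pi) with B = A e^{it} *)
Definition arclen (A B : C) : R :=
  let z := Cmult (Cconj A) B in
  if Rle_dec 0 (Im z) then acos (Re z) else 2 * PI - acos (Re z).

Definition mobius (a b c d z : C) : C :=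
  Cdiv (Cplus (Cmult a z) b) (Cplus (Cmult c z) d).

(* The regular hyperbolic (8g-4)-gon centred at 0 with interior angles pi/2,
   sides labelled counterclockwise.  Data:
   - V i : vertex i (vertex V_i at Euclidean radius r, angle th0 + 2 pi i / N);
   - c i, s i : Euclidean centre and radius of the circle orthogonal to the
     unit circle carrying the geodesic through V_i and V_{i+1} (side i);
   - P i, Q (i+1) : endpoints on the unit circle of that geodesic, P_i beyond
     V_i and Q_{i+1} beyond V_{i+1}.
   Interior angle pi/2 at V_{i+1} = the geodesics of sides i and i+1 meet
   orthogonally, i.e. the radii from their centres to V_{i+1} are orthogonal. *)
Definition right_angled_regular_polygon (g : nat) (th0 r : R)
    (V c : Z -> C) (s : Z -> R) (P Q : Z -> C) : Prop :=
  0 < r < 1 /\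
  (forall i : Z, V i = Cmult (RtoC r) (cis (th0 + 2 * PI * IZR i / Nsides g))) /\
  (forall i : Z, 0 < s i /\ (Cmod (c i)) ^ 2 = 1 + (s i) ^ 2 /\
       Cmod (Cminus (V i) (c i)) = s i /\
       Cmod (Cminus (V (i + 1)%Z) (c i)) = s i) /\
  (forall i : Z, dot (Cminus (V (i + 1)%Z) (c i))
                     (Cminus (V (i + 1)%Z) (c (i + 1)%Z)) = 0) /\
  (forall i : Z, Cmod (P i) = 1 /\ Cmod (Cminus (P i) (c i)) = s i /\
       Cmod (Cminus (P i) (V i)) < Cmod (Cminus (P i) (V (i + 1)%Z))) /\
  (forall i : Z, Cmod (Q (i + 1)%Z) = 1 /\
       Cmod (Cminus (Q (i + 1)%Z) (c i)) = s i /\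
       Cmod (Cminus (Q (i + 1)%Z) (V (i + 1)%Z)) <
         Cmod (Cminus (Q (i + 1)%Z) (V i))).

(* T = mobius a b cc d is the side pairing T_k: it maps side k onto side
   sigma(k) (V_k -> V_{sigma k + 1}, V_{k+1} -> V_{sigma k}), its isometric
   circle { z : |cc z + d|^2 = |a d - b cc| } (where |T'(z)| = 1) is the
   geodesic P_k Q_{k+1}, which it maps onto the geodesic Q_{sigma k+1} P_{sigma k}
   (P_k -> Q_{sigma k+1}, Q_{k+1} -> P_{sigma k}), inside to outside. *)
Definition side_pairing (g : nat) (V c : Z -> C) (s : Z -> R) (P Q : Z -> C)
    (k : Z) (a b cc d : C) : Prop :=
  let T := mobius a b cc d in
  let sk := sig_idx g k in
  Cminus (Cmult a d) (Cmult b cc) <> RtoC 0 /\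
  cc <> RtoC 0 /\
  (forall z : C, (Cmod (Cplus (Cmult cc z) d)) ^ 2 = Cmod (Cminus (Cmult a d) (Cmult b cc))
                 <-> Cmod (Cminus z (c k)) = s k) /\
  T (V k) = V (sk + 1)%Z /\ T (V (k + 1)%Z) = V sk /\
  T (P k) = Q (sk + 1)%Z /\ T (Q (k + 1)%Z) = P sk /\
  (forall z : C, Cplus (Cmult cc z) d <> RtoC 0 ->
     Cmod (Cminus z (c k)) < s k -> s sk < Cmod (Cminus (T z) (c sk))).

(* Main.v *)
Require Import Defs.
From Stdlib Require Import Reals ZArith Lra Psatz.
From Coquelicot Require Import Coquelicot.
Open Scope R_scope.

Lemma sq_le_pos (u v : R) : 0 <= v -> u^2 <= v^2 -> u <= v.
Proof. intros Hv H. destruct (Rle_or_lt u v) as [|Hlt]; auto. nra. Qed.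

Lemma core_real (C S x y : R) :
  0 < C -> 0 < S -> 0 < x -> 0 < y ->
  C^2 + S^2 = 1 -> x^2 = C^2 - S^2 -> y^2 = 2 * S^2 -> 2 * S^2 <= 0.15 ->
  let w1 := C^2 - S^2 in let w2 := 2*C*S in
  let a1 := (w1^2 - w2^2) * x + 2*w1*w2*y in
  let a2 := 2*w1*w2*x - (w1^2 - w2^2) * y in
  let b1 := w1 * x - w2 * y in
  let b2 := w1 * y + w2 * x in
  let W := C*x + S*y in let V := S*x - C*y in
  let Ga1 := 2*x - (1+x^2)*a1 in let Ga2 := y^2 * a2 in
  let Gb1 := 2*x - (1+x^2)*b1 in let Gb2 := y^2 * b2 in
  let Da := 1 + x^2 - 2*x*a1 in let Db := 1 + x^2 - 2*x*b1 in
  0 < a2 /\ 0 < b2 /\ 0 < Da /\ 0 < Db /\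
  0 < W /\ W^2 + V^2 = 1 /\ 0 <= -2*W*V /\
  W < (Ga1*Gb1 + Ga2*Gb2)/(Da*Db) /\ (Ga1*Gb1 + Ga2*Gb2)/(Da*Db) <= 1 /\
  0 < (Ga2*Gb1 - Ga1*Gb2)/(Da*Db).
Proof.
  intros HC HS Hx Hy H1 Hx2 Hy2 HS2 w1 w2 a1 a2 b1 b2 W V Ga1 Ga2 Gb1 Gb2 Da Db.
  assert (HC2 : C^2 = 1 - S^2) by lra.
  assert (Hw1 : w1 = x^2) by (unfold w1; lra).
  assert (Hw12 : w1^2 - w2^2 = 1 - 8*S^2 + 8*S^4).
  { unfold w2. rewrite Hw1, Hx2. replace ((2*C*S)^2) with (4*C^2*S^2) by ring. rewrite HC2. ring. }
  assert (Hxl : 0.92 <= x) by nra.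
  assert (Hx1 : x <= 1) by nra.
  assert (HCl : 0.96 <= C) by nra.
  assert (HC1 : C <= 1) by nra.
  assert (Hyl : 1.414 * S <= y) by (apply sq_le_pos; nra).
  assert (Hyu : y <= 1.415 * S) by (apply sq_le_pos; nra).
  assert (H1x : S^2 <= 1 - x) by nra.
  assert (Ha : a1^2 + a2^2 = 1).
  { unfold a1, a2. replace ((w1 ^ 2 - w2 ^ 2) * x + 2 * w1 * w2 * y) with ((w1 ^ 2 - w2 ^ 2) * x + 2 * w1 * w2 * y) by ring.
    transitivity ((w1^2+w2^2)^2 * (x^2+y^2)); [ring|].
    unfold w1, w2. replace ((C ^ 2 - S ^ 2) ^ 2 + (2 * C * S) ^ 2) with ((C^2+S^2)^2) by ring.
    rewrite H1. nra. }
  assert (Hb : b1^2 + b2^2 = 1).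
  { unfold b1, b2. transitivity ((w1^2+w2^2) * (x^2+y^2)); [ring|].
    unfold w1, w2. replace ((C ^ 2 - S ^ 2) ^ 2 + (2 * C * S) ^ 2) with ((C^2+S^2)^2) by ring.
    rewrite H1. nra. }
  assert (HWV : W^2 + V^2 = 1).
  { unfold W, V. transitivity ((C^2+S^2)*(x^2+y^2)); [ring|]. rewrite H1. nra. }
  assert (Hab1 : a1*b1 + a2*b2 = W^2 - V^2).
  { unfold a1,a2,b1,b2,W,V. transitivity ((w1^2+w2^2) * (w1*(x^2-y^2) + w2*2*x*y)); [ring|].
    replace (w1^2+w2^2) with 1. unfold w1, w2. ring.
    unfold w1, w2. replace ((C ^ 2 - S ^ 2) ^ 2 + (2 * C * S) ^ 2) with ((C^2+S^2)^2) by ring.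
    rewrite H1. ring. }
  assert (Hab2 : a1*b2 - a2*b1 = -2*W*V).
  { unfold a1,a2,b1,b2,W,V. transitivity ((w1^2+w2^2) * (w1*2*x*y - w2*(x^2-y^2))); [ring|].
    replace (w1^2+w2^2) with 1. unfold w1, w2. ring.
    unfold w1, w2. replace ((C ^ 2 - S ^ 2) ^ 2 + (2 * C * S) ^ 2) with ((C^2+S^2)^2) by ring.
    rewrite H1. ring. }
  assert (HW : 0 < W) by (unfold W; nra).
  assert (HV : V < 0) by (unfold V; nra).
  assert (HSy1 : S*y <= 1.415 * S^2) by nra.
  assert (HSy0 : 1.414 * S^2 <= S*y) by nra.
  assert (Ha1 : 2 * S^2 <= 1 - a1).
  { unfold a1. rewrite Hw12. unfold w1, w2. rewrite <- Hx2.
    assert (x^2*C <= 1) by nra. assert (0 <= S*y) by nra. assert (0 <= x^2*C) by nra.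
    assert (x^2 * C * (S*y) <= 1.415 * S^2) by nra.
    assert ((8*S^2 - 8*S^4)*x >= 6.8 * S^2) by nra.
    nra. }
  assert (Hb1 : 3.5 * S^2 <= 1 - b1).
  { unfold b1. rewrite Hw1. unfold w2.
    assert (x^2*x <= x) by nra.
    assert (C*(S*y) >= 0.96 * 1.414 * S^2) by nra.
    nra. }
  assert (Ha2 : 0 < a2).
  { unfold a2. rewrite Hw12, Hw1. unfold w2.
    assert (x^2 >= 0.8464) by nra. assert (C*x >= 0.8832) by nra. assert (x^2*C*x >= 0.8464*0.8832) by nra.
    assert ((1 - 8 * S ^ 2 + 8 * S ^ 4) * y <= y) by nra.
    nra. }
  assert (Hb2 : 0 < b2).
  { unfold b2, w2; rewrite Hw1. assert (0 < x^2*y) by (apply Rmult_lt_0_compat; nra). assert (0 < C*S) by nra. assert (0 < C*S*x) by nra. nra. }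
  assert (Hba : 0 < b2 - a2).
  { unfold a2, b2. rewrite Hw12, Hw1. unfold w2.
    replace (x ^ 2 * y + 2 * C * S * x - (2 * x ^ 2 * (2 * C * S) * x - (1 - 8 * S ^ 2 + 8 * S ^ 4) * y))
      with (y * (x^2 + 1 - 8*S^2 + 8*S^4) - 2*C*S*x*(2*x^2 - 1)) by ring.
    rewrite Hx2, HC2.
    assert (y * (1 - S ^ 2 - S ^ 2 + 1 - 8 * S ^ 2 + 8 * S ^ 4) >= 1.414 * S * (2 - 10*S^2)) by nra.
    assert (C*x <= 1) by nra.
    replace (2 * C * S * x * (2 * (1 - S ^ 2 - S ^ 2) - 1)) with ((2*S*(1-4*S^2))*(C*x)) by ring.
    assert (0 <= 2*S*(1-4*S^2)) by nra.
    assert ((2*S*(1-4*S^2))*(C*x) <= 2*S*(1-4*S^2)) by nra.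
    nra. }
  assert (HDa : 2*x*(1-a1) <= Da) by (unfold Da; nra).
  assert (HDb : 2*x*(1-b1) <= Db) by (unfold Db; nra).
  assert (HDa0 : 0 < Da) by nra.
  assert (HDb0 : 0 < Db) by nra.
  assert (HDD : 16 * S^4 < Da*Db).
  { assert ((2*x*(1-a1))*(2*x*(1-b1)) <= Da*Db) by (apply Rmult_le_compat; nra).
    assert ((1-a1) * (1-b1) >= (2*S^2) * (3.5*S^2)) by (apply Rle_ge, Rmult_le_compat; nra).
    assert (x^2 >= 0.85) by nra.
    assert (0 <= (1-a1)*(1-b1)) by nra.
    assert (x^2 * ((1-a1) * (1-b1)) >= 0.85 * ((2*S^2) * (3.5*S^2))) by (apply Rle_ge, Rmult_le_compat; nra).
    assert (0 < S^4) by (apply pow_lt; lra).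
    nra. }
  assert (Hid1 : Da*Db - (Ga1*Gb1 + Ga2*Gb2) = y^4 * (1 - (a1*b1 + a2*b2))).
  { unfold Da, Db, Ga1, Ga2, Gb1, Gb2.
    replace (y^4) with ((y^2)^2) by ring. replace (y^2) with (1 - x^2) by nra. ring. }
  rewrite Hab1 in Hid1.
  assert (Hy4 : y^4 = 4*S^4) by (replace (y^4) with ((y^2)^2) by ring; rewrite Hy2; ring).
  assert (HW1 : W < 1) by nra.
  assert (Hb1p : 0 < 1 + b1).
  { assert (0 < b2^2) by (apply pow_lt; lra). assert (b1^2 < 1) by lra. nra. }
  assert (Ha1p : 0 < 1 + a1).
  { assert (0 < a2^2) by (apply pow_lt; lra). assert (a1^2 < 1) by lra. nra. }
  assert (HWV0 : 0 <= -2*W*V) by nra.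
  assert (HQ : 0 < b2*(1+a1) - a2*(1+b1)).
  { replace (b2*(1+a1) - a2*(1+b1)) with ((b2 - a2) + (a1*b2 - a2*b1)) by ring. lra. }
  assert (HP2 : 2*(a2*Gb1 - b2*Ga1) * (1+a1)*(1+b1) =
     (b2*(1+a1) - a2*(1+b1)) * ((1-x)^2*(1+a1)*(1+b1) + (1+x)^2*a2*b2)).
  { assert (E1 : 2*(a2*Gb1 - b2*Ga1) = (b2*(1+a1) - a2*(1+b1))*(1-x)^2 + (1+x)^2*(a2*(1-b1) - b2*(1-a1)))
      by (unfold Ga1, Gb1; ring).
    assert (E2 : (1+a1)*(1+b1)*(a2*(1-b1) - b2*(1-a1)) = a2*b2*(b2*(1+a1) - a2*(1+b1))).
    { replace ((1+a1)*(1+b1)*(a2*(1-b1) - b2*(1-a1))) with (a2*(1+a1)*(1-b1^2) - b2*(1+b1)*(1-a1^2)) by ring.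
      replace (1 - b1^2) with (b2^2) by lra. replace (1-a1^2) with (a2^2) by lra. ring. }
    transitivity ((1+a1)*(1+b1)*(2*(a2*Gb1 - b2*Ga1))); [ring|]. rewrite E1.
    transitivity ((1+a1)*(1+b1)*(b2*(1+a1) - a2*(1+b1))*(1-x)^2 + (1+x)^2 * ((1+a1)*(1+b1)*(a2*(1-b1) - b2*(1-a1)))); [ring|].
    rewrite E2. ring. }
  assert (HP : 0 < a2*Gb1 - b2*Ga1).
  { assert (0 < (b2*(1+a1) - a2*(1+b1)) * ((1-x)^2*(1+a1)*(1+b1) + (1+x)^2*a2*b2)).
    { apply Rmult_lt_0_compat; auto. assert (0 <= (1-x)^2*(1+a1)*(1+b1)) by (apply Rmult_le_pos; [apply Rmult_le_pos|]; [apply pow2_ge_0|lra|lra]).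
      assert (0 < (1+x)^2*a2*b2) by (apply Rmult_lt_0_compat; [apply Rmult_lt_0_compat|]; [apply pow_lt; lra|lra|lra]). lra. }
    assert (0 < (1+a1)*(1+b1)) by (apply Rmult_lt_0_compat; lra).
    rewrite <- HP2 in H. 
    destruct (Rle_or_lt (a2*Gb1 - b2*Ga1) 0) as [Hn|]; auto.
    exfalso. assert (2 * (a2 * Gb1 - b2 * Ga1) * (1 + a1) * (1 + b1) = 2 * (a2 * Gb1 - b2 * Ga1) * ((1 + a1) * (1 + b1))) by ring.
    assert (2 * (a2 * Gb1 - b2 * Ga1) * ((1 + a1) * (1 + b1)) <= 0).
    { assert (2 * (a2 * Gb1 - b2 * Ga1) <= 0) by lra.
      apply Rmult_le_0_r_reg_aux || nra. }
    lra. }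
  assert (HDDp : 0 < Da*Db) by (apply Rmult_lt_0_compat; lra).
  assert (HDDn : Da*Db <> 0) by lra.
  repeat split; auto.
  - apply Rmult_lt_reg_r with (Da*Db). lra.
    unfold Rdiv. rewrite Rmult_assoc, Rinv_l by lra. rewrite Rmult_1_r.
    assert (Ga1 * Gb1 + Ga2 * Gb2 = Da*Db - 2 * y^4 * (1-W^2)).
    { replace (2 * y^4 * (1-W^2)) with (y ^ 4 * (1 - (W ^ 2 - V ^ 2))). lra.
      replace (V^2) with (1 - W^2) by lra. ring. }
    rewrite H. rewrite Hy4.
    assert (8*S^4*(1+W) < Da*Db).
    { assert (0 < S^4) by (apply pow_lt; lra). assert (S^4*(1+W) <= S^4 * 2) by (apply Rmult_le_compat_l; lra). lra. }
    assert (0 < 1 - W) by lra.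
    assert (8*S^4*(1+W)*(1-W) < Da*Db*(1-W)) by (apply Rmult_lt_compat_r; lra).
    replace (2 * (4 * S ^ 4) * (1 - W ^ 2)) with (8*S^4*(1+W)*(1-W)) by ring.
    replace (W * (Da * Db)) with (Da*Db - Da*Db*(1-W)) by ring. lra.
  - apply Rmult_le_reg_r with (Da*Db). lra.
    unfold Rdiv. rewrite Rmult_assoc, Rinv_l by lra. rewrite Rmult_1_r.
    assert (0 <= y^4 * (1 - (W^2 - V^2))).
    { rewrite Hy4. apply Rmult_le_pos. assert (0 < S^4) by (apply pow_lt; lra). lra.
      assert (0 <= V^2) by apply pow2_ge_0. lra. } lra.
  - apply Rdiv_lt_0_compat; [|nra].
    unfold Ga2, Gb2. replace (y ^ 2 * a2 * Gb1 - Ga1 * (y ^ 2 * b2)) with (y^2 * (a2*Gb1 - b2*Ga1)) by ring.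
    apply Rmult_lt_0_compat; [apply pow_lt|]; lra.
Qed.

Lemma C_ext (u v : C) : fst u = fst v -> snd u = snd v -> u = v.
Proof. destruct u, v; simpl; intros; subst; auto. Qed.

Lemma Cmod_sq (z : C) (s : R) : Cmod z = s -> fst z ^ 2 + snd z ^ 2 = s ^ 2.
Proof. unfold Cmod. intros <-. rewrite pow2_sqrt; [auto|]. nra. Qed.

Lemma Cmod_pow2 (z : C) : Cmod z ^ 2 = fst z ^ 2 + snd z ^ 2.
Proof. unfold Cmod. rewrite pow2_sqrt; [auto|]. nra. Qed.

Lemma Cmod_lt_sq (z w : C) : Cmod z < Cmod w -> fst z ^ 2 + snd z ^ 2 < fst w ^ 2 + snd w ^ 2.
Proof. unfold Cmod. apply sqrt_lt_0_alt. Qed.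

Lemma cis_add (u v : R) : cis (u + v) = Cmult (cis u) (cis v).
Proof. unfold cis, Cmult; simpl. rewrite cos_plus, sin_plus. f_equal; ring. Qed.

Lemma cis_unit (t : R) : fst (cis t) ^ 2 + snd (cis t) ^ 2 = 1.
Proof. unfold cis; simpl. pose proof (sin2_cos2 t). unfold Rsqr in H. nra. Qed.

Lemma c_solve (E c : C) (r Cc Sc s : R) :
  fst E ^ 2 + snd E ^ 2 = 1 -> Cc^2 + Sc^2 = 1 -> 0 < r -> 0 < Sc -> 0 < Cc -> 0 < s ->
  Cmod c ^ 2 = 1 + s ^ 2 ->
  Cmod (Cminus (Cmult E (r*Cc, -(r*Sc))) c) = s ->
  Cmod (Cminus (Cmult E (r*Cc, r*Sc)) c) = s ->
  c = Cmult E (RtoC ((1 + r^2) / (2*r*Cc))).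
Proof.
  intros HE H1 Hr HS HC Hs Hc HA HB.
  apply Cmod_sq in HA. apply Cmod_sq in HB. rewrite Cmod_pow2 in Hc.
  destruct E as [E1 E2], c as [c1 c2].
  unfold Cmult, Cminus, Cplus, Copp, RtoC in *; cbn [fst snd] in *.
  assert (Hd : 4*r*Sc*(c2*E1 - c1*E2) = 0).
  { rewrite <- (Rminus_diag_eq _ _ (eq_trans HA (eq_sym HB))). ring. }
  assert (Hw2 : c2*E1 - c1*E2 = 0).
  { assert (4*r*Sc <> 0) by (apply Rgt_not_eq; nra). 
    apply (Rmult_eq_reg_l (4*r*Sc)); lra. }
  assert (Hsum : (E1 * (r * Cc) - E2 * - (r * Sc) + - c1) ^ 2 + (E1 * - (r * Sc) + E2 * (r * Cc) + - c2) ^ 2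
     + ((E1 * (r * Cc) - E2 * (r * Sc) + - c1) ^ 2 + (E1 * (r * Sc) + E2 * (r * Cc) + - c2) ^ 2)
     = 2*(r^2*(Cc^2+Sc^2)*(E1^2+E2^2) - 2*r*Cc*(c1*E1+c2*E2) + (c1^2+c2^2))) by ring.
  rewrite HA, HB, H1, HE, Hc in Hsum.
  assert (Hw1 : c1*E1 + c2*E2 = (1 + r^2)/(2*r*Cc)).
  { field_simplify_eq; [|nra]. lra. }
  rewrite <- Hw1. apply C_ext; simpl.
  - transitivity (c1*(E1^2+E2^2)); [rewrite HE; ring|].
    replace (c1 * (E1 ^ 2 + E2 ^ 2)) with (E1 * (c1*E1+c2*E2) - E2*(c2*E1 - c1*E2)) by ring.
    rewrite Hw2. ring.
  - transitivity (c2*(E1^2+E2^2)); [rewrite HE; ring|].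
    replace (c2 * (E1 ^ 2 + E2 ^ 2)) with (E2 * (c1*E1+c2*E2) + E1*(c2*E1 - c1*E2)) by ring.
    rewrite Hw2. ring.
Qed.

Lemma P_solve (E Pp : C) (r Cc Sc rho s : R) (sgn : R) :
  fst E ^ 2 + snd E ^ 2 = 1 -> 0 < r -> 0 < Sc -> 0 < rho -> s^2 = rho^2 - 1 ->
  (sgn = 1 \/ sgn = -1) ->
  Cmod Pp = 1 -> Cmod (Cminus Pp (Cmult E (RtoC rho))) = s ->
  sgn * (fst (Cminus Pp (Cmult E (r*Cc, -(r*Sc)))) ^ 2 + snd (Cminus Pp (Cmult E (r*Cc, -(r*Sc)))) ^ 2)
   < sgn * (fst (Cminus Pp (Cmult E (r*Cc, r*Sc))) ^ 2 + snd (Cminus Pp (Cmult E (r*Cc, r*Sc))) ^ 2) ->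
  Pp = Cmult E (/rho, sgn * - sqrt (1 - (/rho)^2)).
Proof.
  intros HE Hr HS Hrho Hs Hsg HP HPc Hlt.
  apply Cmod_sq in HP. apply Cmod_sq in HPc.
  destruct E as [E1 E2], Pp as [p1 p2].
  unfold Cmult, Cminus, Cplus, Copp, RtoC in *; cbn [fst snd] in *.
  set (q1 := p1*E1 + p2*E2). set (q2 := p2*E1 - p1*E2).
  assert (Hq : q1^2 + q2^2 = 1).
  { transitivity ((p1^2+p2^2)*(E1^2+E2^2)); [unfold q1, q2; ring|]. rewrite HE. lra. }
  assert (Hq1 : q1 = /rho).
  { assert (E : (p1 + - (E1 * rho - E2 * 0)) ^ 2 + (p2 + - (E1 * 0 + E2 * rho)) ^ 2
              = (p1^2+p2^2) - 2*rho*q1 + rho^2*(E1^2+E2^2)) by (unfold q1; ring).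
    rewrite HPc, HE, HP, Hs in E. field_simplify_eq; [|lra]. nra. }
  assert (Hdiff : (p1 + - (E1 * (r * Cc) - E2 * - (r * Sc))) ^ 2 + (p2 + - (E1 * - (r * Sc) + E2 * (r * Cc))) ^ 2
     - ((p1 + - (E1 * (r * Cc) - E2 * (r * Sc))) ^ 2 + (p2 + - (E1 * (r * Sc) + E2 * (r * Cc))) ^ 2)
     = 4*r*Sc*q2) by (unfold q2; ring).
  assert (Hq2 : q2 = sgn * - sqrt (1 - (/rho)^2)).
  { rewrite <- Hq1. replace (1 - q1^2) with (q2^2) by lra.
    destruct Hsg as [-> | ->].
    - assert (q2 < 0).
      { assert (4*r*Sc*q2 < 0) by lra. 
        destruct (Rlt_or_le q2 0); auto. assert (0 <= 4*r*Sc*q2) by (apply Rmult_le_pos; nra). lra. }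
      replace (q2^2) with ((-q2)^2) by ring. rewrite sqrt_pow2 by lra. ring.
    - assert (0 < q2).
      { assert (0 < 4*r*Sc*q2) by lra.
        destruct (Rlt_or_le 0 q2); auto. assert (4*r*Sc*q2 <= 0).
        { replace (4*r*Sc*q2) with (-(4*r*Sc*(-q2))) by ring. assert (0 <= 4*r*Sc*(-q2)) by (apply Rmult_le_pos; nra). lra. }
        lra. }
      rewrite sqrt_pow2 by lra. ring. }
  rewrite <- Hq2, <- Hq1. apply C_ext; cbn [fst snd].
  - transitivity (p1*(E1^2+E2^2)); [rewrite HE; ring|]. unfold q1, q2; ring.
  - transitivity (p2*(E1^2+E2^2)); [rewrite HE; ring|]. unfold q1, q2; ring.
Qed.

Lemma dot_rot (E u v : C) : dot (Cmult E u) (Cmult E v) = (fst E ^ 2 + snd E ^ 2) * dot u v.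
Proof. destruct E, u, v. unfold dot, Cmult, Cconj, Re; cbn [fst snd]. ring. Qed.

Lemma right_angle (E : C) (r Cc Sc rho : R) :
  fst E ^ 2 + snd E ^ 2 = 1 -> Cc^2 + Sc^2 = 1 -> 2*r*Cc*rho = 1 + r^2 ->
  dot (Cminus (Cmult E (r*Cc, r*Sc)) (Cmult E (RtoC rho)))
      (Cminus (Cmult E (r*Cc, r*Sc)) (Cmult (Cmult E (Cc^2 - Sc^2, 2*Cc*Sc)) (RtoC rho))) = 0 ->
  rho^2 * (Cc^2 - Sc^2) = 1.
Proof.
  intros HE H1 Hr Hd.
  replace (Cminus (Cmult E (r*Cc, r*Sc)) (Cmult E (RtoC rho))) with
     (Cmult E (r*Cc - rho, r*Sc)) in Hd
    by (destruct E; apply C_ext; unfold Cmult, Cminus, Cplus, Copp, RtoC; cbn [fst snd]; ring).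
  replace (Cminus (Cmult E (r*Cc, r*Sc)) (Cmult (Cmult E (Cc^2 - Sc^2, 2*Cc*Sc)) (RtoC rho))) with
     (Cmult E (r*Cc - rho*(Cc^2-Sc^2), r*Sc - rho*(2*Cc*Sc))) in Hd
    by (destruct E; apply C_ext; unfold Cmult, Cminus, Cplus, Copp, RtoC; cbn [fst snd]; ring).
  rewrite dot_rot, HE in Hd. unfold dot, Cmult, Cconj, Re in Hd; cbn [fst snd] in Hd.
  assert (E2 : (r * Cc - rho) * (r * Cc - rho * (Cc ^ 2 - Sc ^ 2)) - r * Sc * - (r * Sc - rho * (2 * Cc * Sc))
     = r^2*(Cc^2+Sc^2) - r*Cc*rho*(1 + (Cc^2+Sc^2)) + rho^2*(Cc^2-Sc^2)) by ring.
  rewrite H1 in E2. lra.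
Qed.

Lemma h_bounds (g : nat) : (2 <= g)%nat ->
  12 <= Nsides g /\ 0 < PI / Nsides g /\ PI / Nsides g < PI / 2 /\
  2 * sin (PI / Nsides g) ^ 2 <= 0.15.
Proof.
  intros Hg. assert (HgR : 2 <= INR g) by (replace 2 with (INR 2) by (simpl; ring); apply le_INR; auto).
  assert (HN : 12 <= Nsides g) by (unfold Nsides; lra).
  pose proof PI_RGT_0 as Hpi.
  assert (Hh0 : 0 < PI / Nsides g) by (apply Rdiv_lt_0_compat; lra).
  assert (Hh12 : PI / Nsides g <= PI / 12).
  { unfold Rdiv. apply Rmult_le_compat_l; [lra|]. apply Rinv_le_contravar; lra. }
  split; [auto|]. split; [auto|]. split; [lra|].
  set (h := PI / Nsides g) in *.
  assert (Hc : cos (PI/6) <= cos (2*h)).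
  { destruct (Rle_lt_or_eq_dec (2*h) (PI/6)) as [Hl|He]; [lra| |].
    - left. apply cos_decreasing_1; lra.
    - rewrite He; lra. }
  rewrite cos_PI6, cos_2a_sin in Hc.
  assert (1.7 <= sqrt 3).
  { pose proof (sqrt_sqrt 3 ltac:(lra)). pose proof (sqrt_pos 3). nra. }
  simpl. lra.
Qed.

Lemma frames (g : nat) (th0 r : R) (V : Z -> C) :
  Nsides g <> 0 ->
  (forall i : Z, V i = Cmult (RtoC r) (cis (th0 + 2 * PI * IZR i / Nsides g))) ->
  forall i : Z,
  V i = Cmult (cis (th0 + 2 * PI * IZR i / Nsides g + PI / Nsides g))
              (r * cos (PI / Nsides g), - (r * sin (PI / Nsides g))) /\
  V (i + 1)%Z = Cmult (cis (th0 + 2 * PI * IZR i / Nsides g + PI / Nsides g))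
              (r * cos (PI / Nsides g), r * sin (PI / Nsides g)) /\
  cis (th0 + 2 * PI * IZR (i + 1) / Nsides g + PI / Nsides g) =
  Cmult (cis (th0 + 2 * PI * IZR i / Nsides g + PI / Nsides g))
        (cos (PI / Nsides g) ^ 2 - sin (PI / Nsides g) ^ 2, 2 * cos (PI / Nsides g) * sin (PI / Nsides g)).
Proof.
  intros HN HV i. set (N := Nsides g) in *. set (h := PI / N).
  set (phi := th0 + 2 * PI * IZR i / N + h).
  split; [|split].
  - rewrite HV. replace (th0 + 2 * PI * IZR i / N) with (phi + (- h)) by (unfold phi; ring).
    rewrite cis_add. unfold cis, Cmult, RtoC; cbn [fst snd]. rewrite cos_neg, sin_neg.
    apply C_ext; cbn [fst snd]; ring.
  - rewrite HV. rewrite plus_IZR. replace (th0 + 2 * PI * (IZR i + IZR 1) / N) with (phi + h)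
      by (unfold phi, h; simpl; field; auto).
    rewrite cis_add. unfold cis, Cmult, RtoC; cbn [fst snd].
    apply C_ext; cbn [fst snd]; ring.
  - rewrite plus_IZR. replace (th0 + 2 * PI * (IZR i + IZR 1) / N + h) with (phi + (h + h))
      by (unfold phi, h; simpl; field; auto).
    rewrite !cis_add. unfold cis, Cmult; cbn [fst snd].
    apply C_ext; cbn [fst snd]; ring.
Qed.

Lemma Cmod_pair (u v s : R) : 0 <= s -> u^2 + v^2 = s^2 -> Cmod (u, v) = s.
Proof. intros Hs H. unfold Cmod; cbn [fst snd]. rewrite H. apply sqrt_pow2; auto. Qed.

Lemma C_neq0_snd (z : C) : snd z <> 0 -> z <> RtoC 0.
Proof. intros H E. apply H. rewrite E. reflexivity. Qed.

Lemma C_neq0_unit (z : C) : fst z ^ 2 + snd z ^ 2 = 1 -> z <> RtoC 0.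
Proof. intros H E. rewrite E in H. cbn in H. lra. Qed.

Lemma Cdiv_inv (u v w : C) : v <> RtoC 0 -> Cdiv u v = w -> u = Cmult w v.
Proof. intros Hv H. rewrite <- H. field. auto. Qed.

Lemma T_solve (a b cc d E F kc : C) (rho x y s : R) :
  kc = Cmult E (RtoC rho) -> fst E ^ 2 + snd E ^ 2 = 1 -> 0 < s -> cc <> RtoC 0 ->
  (forall z : C, (Cmod (Cplus (Cmult cc z) d)) ^ 2 = Cmod (Cminus (Cmult a d) (Cmult b cc))
                 <-> Cmod (Cminus z kc) = s) ->
  mobius a b cc d (Cmult E (x, -y)) = Cmult F (x, y) ->
  mobius a b cc d (Cmult E (x, y)) = Cmult F (x, -y) ->
  rho * x = 1 -> x^2 + y^2 = 1 -> 0 < y ->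
  forall w : C, snd w <> 0 ->
  mobius a b cc d (Cmult E w) =
  Cmult F (Cdiv (Cminus (Cmult (RtoC rho) w) (RtoC 1)) (Cminus w (RtoC rho))).
Proof.
  intros Hkc HE Hs Hcc Hiso H1 H2 Hrx Hxy Hy w Hw.
  assert (Hd : d = Copp (Cmult cc kc)).
  { remember (Cplus (Cmult cc kc) d) as dl eqn:Hdl.
    assert (Hgen : forall t : C, fst t ^ 2 + snd t ^ 2 = s ^ 2 ->
               Cmod (Cplus dl (Cmult cc t)) ^ 2 = Cmod (Cminus (Cmult a d) (Cmult b cc))).
    { intros t Ht. rewrite Hdl.
      replace (Cplus (Cplus (Cmult cc kc) d) (Cmult cc t)) with (Cplus (Cmult cc (Cplus kc t)) d) by ring.
      apply Hiso. replace (Cminus (Cplus kc t) kc) with t by ring.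
      destruct t as [t1 t2]. apply Cmod_pair; auto. lra. }
    pose proof (Hgen (s, 0) ltac:(cbn; ring)) as E1.
    pose proof (Hgen (-s, 0) ltac:(cbn; ring)) as E2.
    pose proof (Hgen (0, s) ltac:(cbn; ring)) as E3.
    pose proof (Hgen (0, -s) ltac:(cbn; ring)) as E4.
    rewrite Cmod_pow2 in E1, E2, E3, E4.
    assert (Hdl0 : dl = RtoC 0).
    { assert (Hg : fst cc ^ 2 + snd cc ^ 2 <> 0).
      { intro Hz. apply Hcc. destruct cc as [g1 g2]; cbn in Hz.
        assert (g1 = 0) by nra. assert (g2 = 0) by nra. subst. reflexivity. }
      destruct dl as [l1 l2], cc as [g1 g2].
      unfold Cmult, Cplus in E1, E2, E3, E4; cbn [fst snd] in E1, E2, E3, E4, Hg.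
      assert (F1 : 4*s*(l1*g1 + l2*g2) = 0).
      { rewrite <- (Rminus_diag_eq _ _ (eq_trans E1 (eq_sym E2))). ring. }
      assert (F2 : 4*s*(l2*g1 - l1*g2) = 0).
      { rewrite <- (Rminus_diag_eq _ _ (eq_trans E3 (eq_sym E4))). ring. }
      assert (G1 : l1*g1 + l2*g2 = 0) by (apply (Rmult_eq_reg_l (4*s)); lra).
      assert (G2 : l2*g1 - l1*g2 = 0) by (apply (Rmult_eq_reg_l (4*s)); lra).
      assert (L1 : l1 * (g1^2 + g2^2) = 0).
      { replace (l1 * (g1^2+g2^2)) with (g1*(l1*g1+l2*g2) - g2*(l2*g1 - l1*g2)) by ring. rewrite G1, G2. ring. }
      assert (L2 : l2 * (g1^2 + g2^2) = 0).
      { replace (l2 * (g1^2+g2^2)) with (g2*(l1*g1+l2*g2) + g1*(l2*g1 - l1*g2)) by ring. rewrite G1, G2. ring. }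
      apply Rmult_integral in L1. apply Rmult_integral in L2.
      destruct L1 as [L1|L1]; [|tauto]. destruct L2 as [L2|L2]; [|tauto]. subst. reflexivity. }
    replace d with (Cminus (Cplus (Cmult cc kc) d) (Cmult cc kc)) by ring.
    rewrite <- Hdl, Hdl0. ring. }
  subst d kc.
  assert (HE0 : E <> RtoC 0) by (apply C_neq0_unit; auto).
  set (p := (x, -y)) in *. set (pb := (x, y)) in *.
  assert (Hp : snd p <> 0) by (unfold p; cbn; lra).
  assert (Hpb : snd pb <> 0) by (unfold pb; cbn; lra).
  assert (Hden : forall u : C, snd u <> 0 ->
     Cplus (Cmult cc (Cmult E u)) (Copp (Cmult cc (Cmult E (RtoC rho)))) = Cmult cc (Cmult E (Cminus u (RtoC rho))) /\
     Cmult cc (Cmult E (Cminus u (RtoC rho))) <> RtoC 0).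
  { intros u Hu. split; [ring|].
    apply Cmult_neq_0; auto. apply Cmult_neq_0; auto. apply C_neq0_snd. destruct u; cbn in *. lra. }
  unfold mobius in H1, H2 |- *.
  destruct (Hden _ Hp) as [Dp Np]. destruct (Hden _ Hpb) as [Dpb Npb]. destruct (Hden _ Hw) as [Dw Nw].
  rewrite Dp in H1. rewrite Dpb in H2. rewrite Dw.
  apply Cdiv_inv in H1; auto. apply Cdiv_inv in H2; auto.
  assert (Hppb : Cmult pb p = RtoC 1) by (unfold p, pb; apply C_ext; cbn; nra).
  assert (Hsum : Cmult (RtoC rho) (Cplus p pb) = RtoC 2) by (unfold p, pb; apply C_ext; cbn; nra).
  assert (Hpp0 : Cminus p pb <> RtoC 0) by (apply C_neq0_snd; unfold p, pb; cbn; lra).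
  assert (Hdiff : Cmult E (Cminus p pb) <> RtoC 0) by (apply Cmult_neq_0; auto).
  assert (Ha : a = Cmult F (Cmult cc (RtoC rho))).
  { assert (Hx : Cmult a (Cmult E (Cminus p pb)) = Cmult (Cmult F (Cmult cc (RtoC rho))) (Cmult E (Cminus p pb))).
    { transitivity (Cminus (Cplus (Cmult a (Cmult E p)) b) (Cplus (Cmult a (Cmult E pb)) b)); [ring|].
      rewrite H1, H2. ring. }
    transitivity (Cdiv (Cmult a (Cmult E (Cminus p pb))) (Cmult E (Cminus p pb))); [field; split; auto|].
    rewrite Hx. field. split; auto. }
  assert (Hb : b = Copp (Cmult F (Cmult cc E))).
  { transitivity (Cminus (Cplus (Cmult a (Cmult E p)) b) (Cmult a (Cmult E p))); [ring|].
    rewrite H1, Ha.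
    transitivity (Cmult (Cmult F (Cmult cc E)) (Cminus (Cmult pb p) (Cmult (RtoC rho) (Cplus p pb)))); [unfold pb; ring|].
    rewrite Hppb, Hsum. apply C_ext; destruct F, cc, E; cbn; ring. }
  rewrite Ha, Hb. field. split; [|split; auto].
  apply C_neq0_snd. destruct w; cbn in *. lra.
Qed.

Lemma Cdiv_eq (u v w : C) : v <> RtoC 0 -> u = Cmult w v -> Cdiv u v = w.
Proof. intros Hv H. rewrite H. field. auto. Qed.

Lemma Phi_pair (rho x y a1 a2 : R) : 0 < x -> rho * x = 1 -> y^2 = 1 - x^2 -> a1^2 + a2^2 = 1 -> a2 <> 0 ->
  0 < 1 + x^2 - 2*x*a1 ->
  Cdiv (Cminus (Cmult (RtoC rho) (a1, a2)) (RtoC 1)) (Cminus (a1, a2) (RtoC rho)) =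
  ((2*x - (1+x^2)*a1) / (1 + x^2 - 2*x*a1), - (y^2*a2) / (1 + x^2 - 2*x*a1)).
Proof.
  intros Hx Hrx Hy Ha Ha2 HD.
  assert (Hrho : rho = /x) by (field_simplify_eq; lra).
  set (D := 1 + x^2 - 2*x*a1) in *.
  apply Cdiv_eq.
  { intro E. apply Ha2. apply (f_equal snd) in E. cbn in E. lra. }
  unfold Cmult, Cminus, Cplus, Copp, RtoC; cbn [fst snd].
  apply C_ext; cbn [fst snd].
  - assert (key : D*(rho*a1 - 1) = (2*x - (1+x^2)*a1)*(a1-rho) + y^2*a2*a2).
    { replace (y^2*a2*a2) with ((1-x^2)*(1 - a1^2)) by (rewrite Hy; nra).
      rewrite Hrho. unfold D. field. lra. }
    apply (Rmult_eq_reg_l D); [|lra].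
    transitivity (D*(rho*a1 - 1)); [ring|]. rewrite key. field. lra.
  - apply (Rmult_eq_reg_l D); [|lra].
    rewrite Hrho. unfold D in *. rewrite Hy. field. split; lra.
Qed.

Lemma arc_fin (A B P' Q' : C) (W : R) :
  0 <= Im (Cmult (Cconj A) B) -> 0 <= Im (Cmult (Cconj P') Q') ->
  Re (Cmult (Cconj P') Q') = 2 * W^2 - 1 -> 0 < W -> W < Re (Cmult (Cconj A) B) ->
  Re (Cmult (Cconj A) B) <= 1 ->
  arclen A B < arclen P' Q' / 2.
Proof.
  intros H1 H2 H3 HW H4 H5. unfold arclen.
  destruct (Rle_dec 0 (Im (Cmult (Cconj A) B))) as [_|]; [|lra].
  destruct (Rle_dec 0 (Im (Cmult (Cconj P') Q'))) as [_|]; [|lra].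
  rewrite H3. set (X := Re (Cmult (Cconj A) B)) in *.
  assert (HW1 : W < 1) by lra.
  pose proof (acos_bound W) as [Hb1 Hb2].
  assert (Hc : cos (acos W) = W) by (apply cos_acos; lra).
  assert (Hhalf : acos W <= PI/2).
  { destruct (Rle_or_lt (acos W) (PI/2)) as [|Hlt]; auto.
    assert (cos (acos W) < cos (PI/2)) by (apply cos_decreasing_1; lra).
    rewrite cos_PI2 in H. lra. }
  assert (Hdbl : acos (2*W^2 - 1) = 2 * acos W).
  { replace (2*W^2 - 1) with (cos (2 * acos W)).
    - apply acos_cos. lra.
    - rewrite cos_2a_cos, Hc. ring. }
  rewrite Hdbl.
  assert (acos X < acos W).
  { apply cos_decreasing_0; try apply acos_bound.
    rewrite Hc, cos_acos; lra. }
  lra.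
Qed.

Lemma conj_rot (F u v : C) : fst F ^ 2 + snd F ^ 2 = 1 ->
  Cmult (Cconj (Cmult F u)) (Cmult F v) = Cmult (Cconj u) v.
Proof.
  intros H. destruct F as [f1 f2], u as [u1 u2], v as [v1 v2]; cbn [fst snd] in H.
  unfold Cmult, Cconj; cbn [fst snd]. apply C_ext; cbn [fst snd].
  - transitivity ((f1^2+f2^2)*(u1*v1 + u2*v2)); [ring|]. rewrite H; ring.
  - transitivity ((f1^2+f2^2)*(u1*v2 - u2*v1)); [ring|]. rewrite H; ring.
Qed.

Lemma back_rot (E E' om : C) : fst om ^ 2 + snd om ^ 2 = 1 -> E' = Cmult E om -> E = Cmult E' (Cconj om).
Proof.
  intros H ->. destruct E as [e1 e2], om as [o1 o2]; cbn [fst snd] in H.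
  unfold Cmult, Cconj; cbn [fst snd]. apply C_ext; cbn [fst snd].
  - transitivity (e1*(o1^2+o2^2)); [rewrite H; ring|ring].
  - transitivity (e2*(o1^2+o2^2)); [rewrite H; ring|ring].
Qed.

Lemma core_real2 (C S x y : R) :
  0 < C -> 0 < S -> 0 < x -> 0 < y ->
  C^2 + S^2 = 1 -> x^2 = C^2 - S^2 -> y^2 = 2 * S^2 -> 2 * S^2 <= 0.15 ->
  forall w1 w2 a1 a2 b1 b2 W V Ga1 Ga2 Gb1 Gb2 Da Db : R,
  w1 = C^2 - S^2 -> w2 = 2*C*S ->
  a1 = (w1^2 - w2^2) * x + 2*w1*w2*y ->
  a2 = 2*w1*w2*x - (w1^2 - w2^2) * y ->
  b1 = w1 * x - w2 * y -> b2 = w1 * y + w2 * x ->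
  W = C*x + S*y -> V = S*x - C*y ->
  Ga1 = 2*x - (1+x^2)*a1 -> Ga2 = y^2 * a2 ->
  Gb1 = 2*x - (1+x^2)*b1 -> Gb2 = y^2 * b2 ->
  Da = 1 + x^2 - 2*x*a1 -> Db = 1 + x^2 - 2*x*b1 ->
  0 < a2 /\ 0 < b2 /\ 0 < Da /\ 0 < Db /\
  0 < W /\ W^2 + V^2 = 1 /\ 0 <= -2*W*V /\
  W < (Ga1*Gb1 + Ga2*Gb2)/(Da*Db) /\ (Ga1*Gb1 + Ga2*Gb2)/(Da*Db) <= 1 /\
  0 < (Ga2*Gb1 - Ga1*Gb2)/(Da*Db).
Proof.
  intros HC HS Hx Hy H1 Hx2 Hy2 HS2 w1 w2 a1 a2 b1 b2 W V Ga1 Ga2 Gb1 Gb2 Da Db.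
  intros; subst. exact (core_real C S x y HC HS Hx Hy H1 Hx2 Hy2 HS2).
Qed.

Theorem corollary8p3 (g : nat) (Hg : (2 <= g)%nat) (th0 r : R)
    (V c : Z -> C) (s : Z -> R) (P Q : Z -> C)
    (HF : right_angled_regular_polygon g th0 r V c s P Q)
    (k : Z) (a b cc d : C) (HT : side_pairing g V c s P Q k a b cc d) :
  arclen (mobius a b cc d (P (k + 2)%Z)) (mobius a b cc d (Q (k + 2)%Z))
    < arclen (P (sig_idx g k)) (Q (sig_idx g k)) / 2 /\
  arclen (mobius a b cc d (P (k - 1)%Z)) (mobius a b cc d (Q (k - 1)%Z))
    < arclen (P (sig_idx g k + 1)%Z) (Q (sig_idx g k + 1)%Z) / 2.
Proof.
  destruct HF as [Hr [HV [Hc [Hdot [HP HQ]]]]].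
  destruct (h_bounds g Hg) as [HN [Hh0 [Hh2 HS2]]].
  pose proof (frames g th0 r V ltac:(lra) HV) as Hfr.
  set (N := Nsides g) in *.
  set (h := PI / N) in *.
  set (Cc := cos h) in Hfr, HS2. set (Sc := sin h) in Hfr, HS2.
  set (e := fun i : Z => cis (th0 + 2 * PI * IZR i / N + h)) in Hfr.
  assert (HCc : 0 < Cc) by (apply cos_gt_0; lra).
  assert (HSc : 0 < Sc) by (apply sin_gt_0; lra).
  assert (H1 : Cc^2 + Sc^2 = 1) by (pose proof (sin2_cos2 h) as Hsc; unfold Rsqr in Hsc; fold Cc Sc in Hsc; nra).
  assert (He : forall i, fst (e i) ^ 2 + snd (e i) ^ 2 = 1) by (intro i; apply cis_unit).
  set (om := (Cc^2 - Sc^2, 2*Cc*Sc)).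
  assert (Hfr' : forall i : Z, (V i = Cmult (e i) (r*Cc, -(r*Sc))) /\ (V (Z.add i 1) = Cmult (e i) (r*Cc, r*Sc)) /\
     (e (Z.add i 1) = Cmult (e i) om)) by exact Hfr.
  clear Hfr. rename Hfr' into Hfr.
  assert (Hom : fst om ^ 2 + snd om ^ 2 = 1).
  { unfold om; cbn [fst snd]. transitivity ((Cc^2+Sc^2)^2); [ring|]. rewrite H1; ring. }
  set (rho := (1 + r^2) / (2*r*Cc)).
  assert (Hcf : forall i, c i = Cmult (e i) (RtoC rho)).
  { intro i. destruct (Hc i) as [Hs0 [Hc2 [HA HB]]]. destruct (Hfr i) as [Hv1 [Hv2 _]].
    rewrite Hv1 in HA. rewrite Hv2 in HB.
    apply (c_solve (e i) (c i) r Cc Sc (s i)); auto; lra. }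
  assert (Hs2 : forall i, s i ^ 2 = rho^2 - 1).
  { intro i. destruct (Hc i) as [Hs0 [Hc2 _]]. rewrite Hcf, Cmod_pow2 in Hc2.
    pose proof (He i) as Hei. destruct (e i) as [E1 E2]. unfold Cmult, RtoC in Hc2; cbn [fst snd] in Hc2, Hei.
    assert (E : (E1 * rho - E2 * 0) ^ 2 + (E1 * 0 + E2 * rho) ^ 2 = rho^2 * (E1^2+E2^2)) by ring.
    rewrite Hei in E. lra. }
  assert (Hrho : rho^2 * (Cc^2 - Sc^2) = 1).
  { pose proof (Hdot 0%Z) as Hd. destruct (Hfr 0%Z) as [_ [Hv2 He1]].
    rewrite Hv2, (Hcf 0%Z), (Hcf (0+1)%Z), He1 in Hd.
    apply (right_angle (e 0%Z) r Cc Sc rho); auto.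
    unfold rho. field. lra. }
  assert (Hrho0 : 0 < rho) by (unfold rho; apply Rdiv_lt_0_compat; nra).
  set (x := / rho).
  assert (Hx0 : 0 < x) by (unfold x; apply Rinv_0_lt_compat; auto).
  assert (Hrx : rho * x = 1) by (unfold x; field; lra).
  assert (Hx2 : x^2 = Cc^2 - Sc^2).
  { unfold x. apply (Rmult_eq_reg_l (rho^2)); [|nra]. rewrite Hrho. field. lra. }
  set (y := sqrt (1 - x^2)).
  assert (Hy2 : y^2 = 1 - x^2) by (unfold y; apply pow2_sqrt; nra).
  assert (Hy0 : 0 < y) by (unfold y; apply sqrt_lt_R0; nra).
  assert (Hy2' : y^2 = 2 * Sc^2) by lra.
  assert (HPf : forall i, P i = Cmult (e i) (x, -y)).
  { intro i. destruct (HP i) as [HP1 [HP2 HP3]]. rewrite Hcf in HP2.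
    apply Cmod_lt_sq in HP3. destruct (Hfr i) as [Hv1 [Hv2 _]]. rewrite Hv1, Hv2 in HP3.
    assert (Hsi : 0 < s i) by (destruct (Hc i); lra).
    rewrite (P_solve (e i) (P i) r Cc Sc rho (s i) 1 (He i) ltac:(lra) HSc Hrho0 (Hs2 i) (or_introl eq_refl) HP1 HP2
             ltac:(rewrite !Rmult_1_l; exact HP3)).
    unfold y, x. f_equal. f_equal. ring. }
  assert (HQf : forall i, Q (i + 1)%Z = Cmult (e i) (x, y)).
  { intro i. destruct (HQ i) as [HQ1 [HQ2 HQ3]]. rewrite Hcf in HQ2.
    apply Cmod_lt_sq in HQ3. destruct (Hfr i) as [Hv1 [Hv2 _]]. rewrite Hv1, Hv2 in HQ3.
    assert (Hsi : 0 < s i) by (destruct (Hc i); lra).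
    rewrite (P_solve (e i) (Q (i+1)%Z) r Cc Sc rho (s i) (-1) (He i) ltac:(lra) HSc Hrho0 (Hs2 i) (or_intror eq_refl) HQ1 HQ2
             ltac:(lra)).
    unfold y, x. f_equal. f_equal. ring. }
  cbv zeta in HT. destruct HT as [HD [Hcc0 [Hiso [_ [_ [HTP [HTQ _]]]]]]].
  set (sk := sig_idx g k) in *.
  rewrite HPf, HQf in HTP. rewrite HQf, HPf in HTQ.
  assert (Hsk : 0 < s k) by (destruct (Hc k); lra).
  pose proof (T_solve a b cc d (e k) (e sk) (c k) rho x y (s k) (Hcf k) (He k) Hsk Hcc0 Hiso HTP HTQ Hrx
     ltac:(lra) Hy0) as HTw.
  set (w1 := Cc^2 - Sc^2). set (w2 := 2*Cc*Sc).
  set (a1 := (w1^2 - w2^2) * x + 2*w1*w2*y).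
  set (a2 := 2*w1*w2*x - (w1^2 - w2^2) * y).
  set (b1 := w1 * x - w2 * y). set (b2 := w1 * y + w2 * x).
  set (W := Cc*x + Sc*y). set (Vv := Sc*x - Cc*y).
  set (Ga1 := 2*x - (1+x^2)*a1). set (Ga2 := y^2 * a2).
  set (Gb1 := 2*x - (1+x^2)*b1). set (Gb2 := y^2 * b2).
  set (Da := 1 + x^2 - 2*x*a1). set (Db := 1 + x^2 - 2*x*b1).
  destruct (core_real2 Cc Sc x y HCc HSc Hx0 Hy0 H1 Hx2 Hy2' HS2 w1 w2 a1 a2 b1 b2 W Vv Ga1 Ga2 Gb1 Gb2 Da Db
    eq_refl eq_refl eq_refl eq_refl eq_refl eq_refl eq_refl eq_refl eq_refl eq_refl eq_refl eq_refl eq_refl eq_refl)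
    as [Ha2 [Hb2 [HDa [HDb [HW [HWV [HIm2 [HX1 [HX1' HIm1]]]]]]]]].
  assert (Ha : a1^2 + a2^2 = 1).
  { unfold a1, a2. transitivity ((w1^2+w2^2)^2 * (x^2+y^2)); [ring|].
    replace (w1^2+w2^2) with (fst om ^ 2 + snd om ^ 2) by (unfold om, w1, w2; cbn; ring). rewrite Hom. lra. }
  assert (Hb : b1^2 + b2^2 = 1).
  { unfold b1, b2. transitivity ((w1^2+w2^2) * (x^2+y^2)); [ring|].
    replace (w1^2+w2^2) with (fst om ^ 2 + snd om ^ 2) by (unfold om, w1, w2; cbn; ring). rewrite Hom. lra. }
  assert (Hyx : y^2 = 1 - x^2) by lra.
  assert (Hz2 : forall j : Z, Cmult (Cconj (P j)) (Q j) = (W^2 - Vv^2, -2*W*Vv)).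
  { intro j. rewrite HPf.
    replace j with (Z.add (j - 1) 1) at 2 by ring. rewrite HQf.
    replace j with (Z.add (j - 1) 1) at 1 by ring. destruct (Hfr (j-1)%Z) as [_ [_ Ej]]. rewrite Ej.
    replace (Cmult (Cmult (e (j - 1)%Z) om) (x, - y)) with (Cmult (e (j - 1)%Z) (Cmult om (x, - y))) by ring.
    rewrite conj_rot by apply He.
    unfold om, W, Vv; apply C_ext; unfold Cmult, Cconj; cbn [fst snd]; ring. }
  assert (HRe2 : forall j : Z, Re (Cmult (Cconj (P j)) (Q j)) = 2 * W^2 - 1).
  { intro j. rewrite Hz2. unfold Re; cbn [fst]. lra. }
  assert (HIm2' : forall j : Z, 0 <= Im (Cmult (Cconj (P j)) (Q j))).
  { intro j. rewrite Hz2. unfold Im; cbn [snd]. lra. }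
  split.
  -
    assert (HPk : P (k + 2)%Z = Cmult (e k) (a1, a2)).
    { rewrite HPf. replace (k + 2)%Z with (Z.add (k + 1) 1) by ring.
      destruct (Hfr (k+1)%Z) as [_ [_ E2]]. rewrite E2. destruct (Hfr k) as [_ [_ E1]]. rewrite E1.
      destruct (e k) as [f1 f2]. unfold om, a1, a2, w1, w2. apply C_ext; unfold Cmult; cbn [fst snd]; ring. }
    assert (HQk : Q (k + 2)%Z = Cmult (e k) (b1, b2)).
    { replace (k + 2)%Z with (Z.add (k + 1) 1) by ring. rewrite HQf.
      destruct (Hfr k) as [_ [_ E1]]. rewrite E1.
      destruct (e k) as [f1 f2]. unfold om, b1, b2, w1, w2. apply C_ext; unfold Cmult; cbn [fst snd]; ring. }
    assert (Hz1 : Cmult (Cconj (mobius a b cc d (P (k + 2)%Z))) (mobius a b cc d (Q (k + 2)%Z)) =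
                  ((Ga1*Gb1 + Ga2*Gb2)/(Da*Db), (Ga2*Gb1 - Ga1*Gb2)/(Da*Db))).
    { rewrite HPk, HQk. rewrite (HTw (a1, a2)) by (cbn; lra). rewrite (HTw (b1, b2)) by (cbn; lra).
      rewrite conj_rot by apply He.
      rewrite (Phi_pair rho x y a1 a2 Hx0 Hrx Hyx Ha ltac:(lra) HDa).
      rewrite (Phi_pair rho x y b1 b2 Hx0 Hrx Hyx Hb ltac:(lra) HDb).
      fold Ga1 Gb1 Da Db. apply C_ext; unfold Cmult, Cconj; cbn [fst snd]; unfold Ga2, Gb2; field; lra. }
    apply (arc_fin _ _ _ _ W); auto.
    + rewrite Hz1. unfold Im; cbn [snd]. lra.
    + rewrite Hz1. unfold Re; cbn [fst]. lra.
    + rewrite Hz1. unfold Re; cbn [fst]. lra.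
  -
    assert (Hkm1 : e (k - 1)%Z = Cmult (e k) (Cconj om)).
    { apply back_rot; auto. destruct (Hfr (k-1)%Z) as [_ [_ E1]].
      replace (Z.add (k - 1) 1) with k in E1 by ring. exact E1. }
    assert (Hkm2 : e (k - 2)%Z = Cmult (e (k - 1)%Z) (Cconj om)).
    { apply back_rot; auto. destruct (Hfr (k-2)%Z) as [_ [_ E1]].
      replace (Z.add (k - 2) 1) with (k - 1)%Z in E1 by ring. exact E1. }
    assert (HPk : P (k - 1)%Z = Cmult (e k) (b1, - b2)).
    { rewrite HPf, Hkm1.
      destruct (e k) as [f1 f2]. unfold om, b1, b2, w1, w2. apply C_ext; unfold Cmult, Cconj; cbn [fst snd]; ring. }
    assert (HQk : Q (k - 1)%Z = Cmult (e k) (a1, - a2)).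
    { replace (k - 1)%Z with (Z.add (k - 2) 1) by ring. rewrite HQf, Hkm2, Hkm1.
      destruct (e k) as [f1 f2]. unfold om, a1, a2, w1, w2. apply C_ext; unfold Cmult, Cconj; cbn [fst snd]; ring. }
    assert (Ha' : b1^2 + (-b2)^2 = 1) by lra.
    assert (Hb' : a1^2 + (-a2)^2 = 1) by lra.
    assert (Hz1 : Cmult (Cconj (mobius a b cc d (P (k - 1)%Z))) (mobius a b cc d (Q (k - 1)%Z)) =
                  ((Ga1*Gb1 + Ga2*Gb2)/(Da*Db), (Ga2*Gb1 - Ga1*Gb2)/(Da*Db))).
    { rewrite HPk, HQk. rewrite (HTw (b1, - b2)) by (cbn; lra). rewrite (HTw (a1, - a2)) by (cbn; lra).
      rewrite conj_rot by apply He.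
      rewrite (Phi_pair rho x y b1 (-b2) Hx0 Hrx Hyx Ha' ltac:(lra) HDb).
      rewrite (Phi_pair rho x y a1 (-a2) Hx0 Hrx Hyx Hb' ltac:(lra) HDa).
      fold Ga1 Gb1 Da Db. apply C_ext; unfold Cmult, Cconj; cbn [fst snd]; unfold Ga2, Gb2; field; lra. }
    apply (arc_fin _ _ _ _ W); auto.
    + rewrite Hz1. unfold Im; cbn [snd]. lra.
    + rewrite Hz1. unfold Re; cbn [fst]. lra.
    + rewrite Hz1. unfold Re; cbn [fst]. lra.
Qed.
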